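(* Let $a_1,a_2,b_1,b_2>0$, set $a:=\min\{a_1+1,a_2\}$, $b:=\min\{b_2+1,b_1\}$, $c:=\min\{a_1,a_2,b_1,b_2\}$, and assume $c>1$, $\max\{a,b\}<c+1$ and $a\le b$. Let $k_0\ge 6$ be an integer such that $b<c-1+2\cos\frac{\pi}{k_0}$. Then for every integer $k\ge k_0$ there exists a sequence $(m_i,n_i)_{i\in\mathbb N}$ of positive integers such that $(m_i,n_i,k)$ is admissible for every $i$.
   Context: A triplet of positive integers $(m,n,k)$ with $k\ge k_0$ is called admissible if $\mu(m,n,k):=\frac{2m\sin\frac\pi k+1}{2n}$ satisfies \[\max\Big\{\tfrac1a,\tfrac12,\tfrac{1}{a-b+2\cos\frac\pi k}\Big\}<\mu(m,n,k)<\tfrac{1}{a+1-c}.\] *)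

(* Defs.v *)
From Stdlib Require Import Reals Lra Lia.
Open Scope R_scope.

Definition mu (m n k : nat) : R :=
  (2 * INR m * sin (PI / INR k) + 1) / (2 * INR n).

Definition admissible (a b c : R) (k0 m n k : nat) : Prop :=
  (0 < m)%nat /\ (0 < n)%nat /\ (0 < k)%nat /\ (k0 <= k)%nat /\
  Rmax (Rmax (1 / a) (1 / 2)) (1 / (a - b + 2 * cos (PI / INR k))) < mu m n k /\
  mu m n k < 1 / (a + 1 - c).

(* Main.v *)
Require Import Defs.
From Stdlib Require Import Reals Lra Lia ZArith.
Open Scope R_scope.

Definition mof (L s : R) (n : nat) : nat := Z.to_nat (up ((2 * INR n * L - 1) / (2 * s))).

Lemma mof_spec (L U s : R) (n : nat) :
  0 < L -> 0 < s -> 1 < 2 * INR n * L -> s < INR n * (U - L) ->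
  (0 < mof L s n)%nat /\ L < (2 * INR (mof L s n) * s + 1) / (2 * INR n) < U.
Proof.
  intros HL Hs H1 H2.
  set (x := (2 * INR n * L - 1) / (2 * s)).
  assert (Hx : 0 < x) by (unfold x; apply Rdiv_lt_0_compat; lra).
  destruct (archimed x) as [Hu1 Hu2].
  assert (Hz : (0 < up x)%Z) by (apply lt_IZR; lra).
  assert (HM : INR (mof L s n) = IZR (up x)).
  { unfold mof. fold x. rewrite INR_IZR_INZ. rewrite Z2Nat.id by lia. reflexivity. }
  assert (Hn : 0 < INR n) by nra.
  split.
  - unfold mof; fold x; lia.
  - rewrite HM.
    assert (E1 : 2 * s * x = 2 * INR n * L - 1) by (unfold x; field; lra).
    split.
    + apply Rmult_lt_reg_r with (2 * INR n); [lra|].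
      unfold Rdiv; rewrite Rmult_assoc, Rinv_l by lra. nra.
    + apply Rmult_lt_reg_r with (2 * INR n); [lra|].
      unfold Rdiv; rewrite Rmult_assoc, Rinv_l by lra. nra.
Qed.

Theorem lemma2p2 (a1 a2 b1 b2 : R) (k0 : nat) :
  0 < a1 -> 0 < a2 -> 0 < b1 -> 0 < b2 ->
  let a := Rmin (a1 + 1) a2 in
  let b := Rmin (b2 + 1) b1 in
  let c := Rmin (Rmin a1 a2) (Rmin b1 b2) in
  1 < c -> Rmax a b < c + 1 -> a <= b ->
  (6 <= k0)%nat ->
  b < c - 1 + 2 * cos (PI / INR k0) ->
  forall k : nat, (k0 <= k)%nat ->
  exists s : nat -> nat * nat,
    (forall i j, s i = s j -> i = j) /\
    (forall i, admissible a b c k0 (fst (s i)) (snd (s i)) k).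
Proof.
  intros Ha1 Ha2 Hb1 Hb2 a b c Hc Hmax Hab Hk0 Hb k Hk.
  assert (Hca : c <= a).
  { unfold c, a, Rmin. repeat destruct Rle_dec; lra. }
  assert (Hmax' : a < c + 1 /\ b < c + 1).
  { revert Hmax. unfold Rmax. destruct Rle_dec; lra. }
  assert (Hk0r : 6 <= INR k0) by (replace 6 with (INR 6) by (simpl; lra); apply le_INR; lia).
  assert (Hkr : INR k0 <= INR k) by (apply le_INR; lia).
  assert (Hpk : 0 < PI / INR k) by (apply Rdiv_lt_0_compat; [apply PI_RGT_0|lra]).
  assert (Hpk1 : PI / INR k <= PI / INR k0).
  { unfold Rdiv. apply Rmult_le_compat_l; [pose proof PI_RGT_0; lra|].
    apply Rinv_le_contravar; lra. }
  assert (Hpk0 : PI / INR k0 < PI).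
  { apply Rmult_lt_reg_r with (INR k0); [lra|]. unfold Rdiv.
    rewrite Rmult_assoc, Rinv_l by lra. pose proof PI_RGT_0; nra. }
  assert (Hcos : cos (PI / INR k0) <= cos (PI / INR k)).
  { destruct (Rle_lt_or_eq_dec _ _ Hpk1) as [h|h]; [left; apply cos_decreasing_1; lra | right; rewrite h; reflexivity]. }
  assert (Hsin : 0 < sin (PI / INR k)) by (apply sin_gt_0; lra).
  set (t := cos (PI / INR k)) in *.
  set (sn := sin (PI / INR k)) in *.
  set (L := Rmax (Rmax (1 / a) (1 / 2)) (1 / (a - b + 2 * t))).
  set (U := 1 / (a + 1 - c)).
  assert (HL0 : 0 < L).
  { unfold L. eapply Rlt_le_trans; [|apply Rmax_l]. eapply Rlt_le_trans; [|apply Rmax_r]. lra. }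
  assert (HLU : L < U).
  { unfold L, U. apply Rmax_lub_lt; [apply Rmax_lub_lt|];
    unfold Rdiv; rewrite !Rmult_1_l; apply Rinv_lt_contravar;
    try apply Rmult_lt_0_compat; lra. }
  set (y := Rmax (1 / (2 * L)) (sn / (U - L))).
  set (N := Z.to_nat (up y)).
  assert (Hy : 0 < y) by (unfold y; eapply Rlt_le_trans; [|apply Rmax_l]; apply Rdiv_lt_0_compat; lra).
  destruct (archimed y) as [Hu1 _].
  assert (HN : y < INR N).
  { unfold N. rewrite INR_IZR_INZ, Z2Nat.id; [lra|]. apply le_IZR; lra. }
  exists (fun i => (mof L sn (N + i + 1), (N + i + 1)%nat)).
  split.
  - intros i j H. injection H. lia.
  - intros i. simpl.
    assert (HNi : INR N <= INR (N + i + 1)) by (apply le_INR; lia).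
    set (n := (N + i + 1)%nat) in *.
    assert (H1 : 1 < 2 * INR n * L).
    { assert (1 / (2 * L) < INR n) by (assert (1 / (2 * L) <= y) by apply Rmax_l; lra).
      apply Rmult_lt_reg_r with (/ (2 * L)). apply Rinv_0_lt_compat; lra.
      replace (2 * INR n * L * / (2 * L)) with (INR n) by (field; lra). lra. }
    assert (H2 : sn < INR n * (U - L)).
    { assert (sn / (U - L) < INR n) by (assert (sn / (U - L) <= y) by apply Rmax_r; lra).
      apply Rmult_lt_reg_r with (/ (U - L)). apply Rinv_0_lt_compat; lra.
      replace (INR n * (U - L) * / (U - L)) with (INR n) by (field; lra). lra. }
    destruct (mof_spec L U sn n HL0 Hsin H1 H2) as [Hm [Hlo Hhi]].
    unfold admissible, mu. fold t sn. fold L. fold U.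
    repeat split; try assumption; unfold n; lia.
Qed.
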